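(* Let $F$ be a violating edge set and let $(\mathcal{T},\mathcal{M},y)$ be a tree embedding of $(G,\tilde x)$ that is good for $F$. Then $|Z_F|\le 2^{2(p+q)\beta}k$.
   Context: Setting: $G=(V,E)$ is an undirected graph with edges partitioned into safe and unsafe edges; $p,q$ are nonnegative integers with $p+q\ge1$; $(s_i,t_i)$, $i\in[k]$, are terminal pairs; $H\subseteq E$ is such that every pair is $(p,q)$-flex-connected in $H$ (every cut $\delta_H(S)$ separating $s_i$ from $t_i$ has at least $p$ safe edges or at least $p+q$ edges). A violating edge set is $F=\delta_H(S)$ for some $S$ separating some pair with $|\delta_H(S)|=p+q$ and at most $p-1$ safe edges. Let $\beta\ge1$ and let $\tilde x:E\to\mathbb{R}_{>0}$ be capacities with $\tilde x_e=\frac{1}{4(p+q)\beta}$ for every $e\in H$. A tree embedding of $(G,\tilde x)$ is a tree $\mathcal{T}$ with $\mathcal{M}_1:V(\mathcal{T})\to V$ restricting to a bijection between leaves and $V$ (vertices identified with leaves), and $\mathcal{M}_2$ mapping each tree edge $(a,b)$ to a path in $G$ between $\mathcal{M}_1(a),\mathcal{M}_1(b)$; capacities $y(f)=\tilde x(\delta_G(A'))$ with $A'$ the vertex set of leaves in one component of $\mathcal{T}-f$; $\mathcal{M}^{-1}(F)=\{f:\mathcal{M}_2(f)\cap F\neq\emptyset\}$; good for $F$ means $y(\mathcal{M}^{-1}(F))\le\frac12$. $\mathcal{Q}_F$ is the set of components of $(V,H\setminus F)$; $Q_{s_i},Q_{t_i}$ contain $s_i,t_i$; $Q\in\mathcal{Q}_F$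 is shattered if its leaves are not all in one component of $\mathcal{T}-\mathcal{M}^{-1}(F)$; disjoint $A,B\subseteq V$ partition the shattered components if each shattered component lies in $A$ or in $B$; $Z_F=\{(A\cup Q_{s_i},B\cup Q_{t_i}):(A,B)\text{ partitions the shattered components},i\in[k]\}$. *)

(* Defs.v *)
From HB Require Import structures.
From mathcomp Require Import all_boot all_order all_algebra.
From mathcomp Require Import reals exp.
Set Implicit Arguments. Unset Strict Implicit. Unset Printing Implicit Defensive.
Import Order.TTheory GRing.Theory Num.Theory.
Local Open Scope ring_scope.

Section Graphs.
Variables (V E : finType) (ends : E -> V * V).

Definition joins (e : E) (u v : V) : bool :=
  (ends e == (u, v)) || (ends e == (v, u)).

Definition adjX (X : {set E}) : rel V := fun u v => [exists e in X, joins e u v].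

Definition cut (X : {set E}) (S : {set V}) : {set E} :=
  [set e in X | ((ends e).1 \in S) != ((ends e).2 \in S)].

Fixpoint walk (u : V) (s : seq E) (v : V) : bool :=
  match s with
  | [::] => u == v
  | e :: s' => ((ends e).1 == u) && walk (ends e).2 s' v
               || ((ends e).2 == u) && walk (ends e).1 s' v
  end.

Definition compX (X : {set E}) (v : V) : {set V} := [set u | connect (adjX X) v u].

Definition connected_graph : bool :=
  (0 < #|V|)%N && [forall u, forall v, connect (adjX setT) u v].

Definition is_tree : bool := connected_graph && (#|E|.+1 == #|V|)%N.

(* degree (no loops in a tree) *)
Definition degree (v : V) : nat := #|[set e | ((ends e).1 == v) || ((ends e).2 == v)]|.

(* leaves of a tree (degree <= 1, so that a one-node tree is its own leaf) *)
Definition is_leaf (v : V) : bool := (degree v <= 1)%N.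

End Graphs.

Section Setting.
Variables (V E : finType) (ends : E -> V * V) (safe : pred E)
          (p q k : nat) (s t : 'I_k -> V) (H : {set E}).

Definition separates (S : {set V}) (i : 'I_k) : bool := (s i \in S) != (t i \in S).

Definition nsafe (X : {set E}) : nat := #|[set e in X | safe e]|.

Definition flex_connected : Prop :=
  forall (i : 'I_k) (S : {set V}), separates S i ->
    (p <= nsafe (cut ends H S))%N \/ (p + q <= #|cut ends H S|)%N.

Definition violating (F : {set E}) : Prop :=
  exists (S : {set V}) (i : 'I_k),
    [/\ separates S i, F = cut ends H S, #|cut ends H S| = (p + q)%N
      & (nsafe (cut ends H S) < p)%N].
End Setting.

Section TreeEmbedding.
Variables (R : realType) (V E : finType) (ends : E -> V * V) (x : E -> R).
Variables (N TE : finType) (tends : TE -> N * N) (M1 : N -> V) (M2 : TE -> seq E).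

Definition tree_embedding : Prop :=
  [/\ is_tree tends,
      {in is_leaf tends &, injective M1},
      (forall v : V, exists2 a, is_leaf tends a & M1 a = v)
    & forall f : TE, walk ends (M1 (tends f).1) (M2 f) (M1 (tends f).2)].

Definition tconn (X : {set TE}) : rel N := connect (adjX tends (~: X)).

Definition side (f : TE) : {set V} :=
  [set v | [exists a, [&& is_leaf tends a, M1 a == v & tconn [set f] (tends f).1 a]]].

Definition ycap (f : TE) : R := \sum_(e in cut ends setT (side f)) x e.

Definition Minv (F : {set E}) : {set TE} := [set f | has (fun e => e \in F) (M2 f)].

Definition good_for (F : {set E}) : Prop := \sum_(f in Minv F) ycap f <= 2^-1.

Definition shattered (F : {set E}) (Q : {set V}) : bool :=
  ~~ [forall a, forall b,
        [&& is_leaf tends a, is_leaf tends b, M1 a \in Q & M1 b \in Q]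
          ==> tconn (Minv F) a b].

Variables (H : {set E}) (k : nat) (s t : 'I_k -> V).

Definition QF (F : {set E}) (v : V) : {set V} := compX ends (H :\: F) v.

Definition partitions_shattered (F : {set E}) (A B : {set V}) : bool :=
  [&& [disjoint A & B],
      [forall v, shattered F (QF F v) ==> ((QF F v \subset A) || (QF F v \subset B))]
    & [forall v, (v \in A :|: B) ==> shattered F (QF F v)]].

Definition ZF (F : {set E}) : {set {set V} * {set V}} :=
  [set X | [exists A : {set V}, exists B : {set V}, exists i : 'I_k,
     partitions_shattered F A B && (X == (A :|: QF F (s i), B :|: QF F (t i)))]].
End TreeEmbedding.

(* Main.v *)
Require Import Defs.
From HB Require Import structures.
From mathcomp Require Import all_boot all_order all_algebra.
From mathcomp Require Import reals exp.
From mathcomp Require Import zify ring lra.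
Import Order.TTheory GRing.Theory Num.Theory.
Set Implicit Arguments. Unset Strict Implicit. Unset Printing Implicit Defensive.

Section G.
Variables (T Ed : finType) (en : Ed -> T * T).
Local Notation cx X := (connect (adjX en X)).

Lemma adjX_sym X : symmetric (adjX en X).
Proof.
move=> a b; apply/existsP/existsP => -[e /andP[eX j]]; exists e;
  by rewrite eX /joins orbC.
Qed.

Lemma csym X : connect_sym (adjX en X).
Proof. exact: sym_connect_sym (adjX_sym X). Qed.

Lemma cmono (X Y : {set Ed}) : X \subset Y -> forall a b, cx X a b -> cx Y a b.
Proof.
move=> sXY a b; apply: connect_sub => u v /existsP[e /andP[eX j]].
apply: connect1; apply/existsP; exists e; by rewrite (subsetP sXY).
Qed.

Lemma L1 (X : {set Ed}) f a b : cx (f |: X) a b -> cx X a b \/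
  ((cx X a (en f).1 || cx X a (en f).2) && (cx X (en f).1 b || cx X (en f).2 b)).
Proof.
case/connectP=> pth; elim: pth a => [|c pth IH] a /=.
  by move=> _ ->; left; exact: connect0.
move=> /andP[ac pc] lb; have {IH} := IH c pc lb.
move: ac => /existsP[e /andP[]]; rewrite !inE => /orP[/eqP ->|eX] j.
  move: j; rewrite /joins; case: (en f) => u w /=.
  case/orP => /eqP [? ?]; subst => -[h|/andP[h1 h2]]; right;
    by rewrite ?connect0 ?h ?h2 ?orbT.
have ac : cx X a c by apply: connect1; apply/existsP; exists e; rewrite eX.
case=> [h|/andP[h1 h2]]; first by left; exact: connect_trans ac h.
right; rewrite h2 andbT; case/orP: h1 => h.
  by rewrite (connect_trans ac h).
by rewrite (connect_trans ac h) orbT.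
Qed.

Lemma compX_eq (X : {set Ed}) a b : cx X a b -> compX en X a = compX en X b.
Proof.
move=> ab; apply/setP=> z; rewrite !inE; apply/idP/idP => h.
  by apply: connect_trans _ h; rewrite csym.
exact: connect_trans ab h.
Qed.

Definition comps (X : {set Ed}) := [set compX en X v | v in T].

Lemma comps_step (X : {set Ed}) f : f \notin X ->
  (#|comps X| <= #|comps (f |: X)| + 1)%N.
Proof.
move=> fX; set u := (en f).1; set w := (en f).2.
set D := [set compX en X v | v in [set v | ~~ (cx X u v || cx X w v)]].
have s1 : comps X \subset D :|: [set compX en X u; compX en X w].
  apply/subsetP => C /imsetP[v _ ->]; rewrite !inE.
  case hu: (cx X u v); first by rewrite (compX_eq hu) eqxx orbT.
  case hw: (cx X w v); first by rewrite (compX_eq hw) eqxx !orbT.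
  by rewrite imset_f // inE hu hw.
have eqD : forall v, ~~ (cx X u v || cx X w v) -> compX en (f |: X) v = compX en X v.
  move=> v hv; apply/setP => z; rewrite !inE; apply/idP/idP => h.
    case/L1: h => // /andP[h1 _]; move: hv h1; rewrite !(csym X v) => /negPf.
    by rewrite /u /w => ->.
  by apply: cmono h; apply: subsetUr.
have s2 : compX en (f |: X) u |: D \subset comps (f |: X).
  apply/subsetP => C; rewrite !inE => /orP[/eqP ->|/imsetP[v]]; first exact: imset_f.
  by rewrite inE => hv ->; rewrite -(eqD _ hv); apply: imset_f.
have nD : compX en (f |: X) u \notin D.
  apply/imsetP => -[v]; rewrite inE => hv e.
  have : u \in compX en (f |: X) u by rewrite inE connect0.
  rewrite e inE csym => h; by move: hv; rewrite h.
have := subset_leq_card s1; have := subset_leq_card s2.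
rewrite cardsU1 nD /= => h2 h1.
have := (leq_card_setU D [set compX en X u; compX en X w]).1.
rewrite cards2 => h3.
have h4 : ((compX en X u != compX en X w).+1 <= 2)%N by case: (_ != _).
move: h3 h4; case: (compX en X u != compX en X w) => /= h3 _; lia.
Qed.

Lemma L2 n (X : {set Ed}) : (#|X| <= n)%N -> (#|T| <= #|X| + #|comps X|)%N.
Proof.
elim: n X => [|n IH] X hX.
  have X0 : X = set0 by apply/eqP; rewrite -cards_eq0; lia.
  subst X; rewrite cards0 add0n.
  have -> : comps set0 = [set [set v] | v in T].
    apply: eq_imset => v; apply/setP => z; rewrite !inE.
    apply/idP/idP => [/connectP[[|c pth] /=]|/eqP ->].
    - by move=> _ ->.
    - by case/andP => /existsP[e]; rewrite inE.
    - exact: connect0.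
  by rewrite card_imset //; apply: set1_inj.
case: (set_0Vmem X) => [->|[f fX]]; first by apply: IH; rewrite cards0.
have := IH (X :\ f); rewrite (cardsD1 f X) fX in hX *.
move=> /(_ ltac:(lia)) h.
have := @comps_step (X :\ f) f (negbT (setD11 f X)); rewrite setD1K // => h'.
lia.
Qed.

Lemma tree_cut : is_tree en -> forall f, ~~ cx (~: [set f]) (en f).1 (en f).2.
Proof.
case/andP => /andP[_ /forallP conn] /eqP card f; apply/negP => uw.
set X := ~: [set f].
have allc : forall a b, cx X a b.
  move=> a b; have := conn a => /forallP /(_ b) ab.
  have : cx (f |: X) a b.
    by have -> : f |: X = setT by apply/setP => z; rewrite !inE; case: eqP.
  case/L1 => // /andP[h1 h2].
  have wu : cx X (en f).2 (en f).1 by rewrite csym.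
  case/orP: h1 => h1; case/orP: h2 => h2.
  - exact: connect_trans h1 h2.
  - exact: connect_trans h1 (connect_trans uw h2).
  - exact: connect_trans h1 (connect_trans wu h2).
  - exact: connect_trans h1 h2.
have := L2 (leqnn #|X|).
have c1 : (#|comps X| <= 1)%N.
  rewrite -(cards1 (compX en X (en f).1)); apply: subset_leq_card.
  apply/subsetP => C /imsetP[v _ ->]; rewrite inE (compX_eq (allc v (en f).1)) //.
have : (0 < #|Ed|)%N by apply/card_gt0P; exists f.
move: c1; rewrite /X cardsC1; lia.
Qed.

Lemma L3 (X : {set Ed}) (S : {set T}) c d : cx X c d -> c \in S -> d \notin S ->
  exists e, [/\ e \in X, ((en e).1 \in S) != ((en e).2 \in S) & cx X c (en e).1].
Proof.
case/connectP=> pth; elim: pth c => [|c' pth IH] c /=.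
  by move=> _ -> ->.
move=> /andP[cc' pc'] ld cS dS.
case c'S: (c' \in S).
  have [e [eX cr ce]] := IH c' pc' ld c'S dS; exists e; split => //.
  exact: connect_trans (connect1 cc') ce.
move: (cc') => /existsP[e /andP[eX j]]; exists e.
move: j; rewrite /joins; case/orP=> /eqP -> /=; rewrite ?cS ?c'S; split => //; exact: connect1.
Qed.

Lemma sep_edge (Y : {set Ed}) a b : is_tree en -> ~~ cx (~: Y) a b ->
  exists2 f, f \in Y & cx (~:[set f]) (en f).1 a != cx (~:[set f]) (en f).1 b.
Proof.
move=> tr nab.
have P0 : (set0 \subset Y) && cx (~: set0) a b.
  rewrite sub0set setC0 /=; case/andP: tr => /andP[_ /forallP c] _.
  by move: (c a) => /forallP.
case: (@arg_maxnP _ set0 (fun Z : {set Ed} => (Z \subset Y) && cx (~: Z) a b) (fun Z : {set Ed} => #|Z|) P0) => Z /andP[ZY cZ] maxZ.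
have : ~~ (Y \subset Z).
  apply/negP => YZ; have : Z = Y by apply/eqP; rewrite eqEsubset ZY YZ.
  by move=> e; move: nab; rewrite -e cZ.
case/subsetPn => f fY fZ; exists f => //.
have nf : ~~ cx (~: (f |: Z)) a b.
  apply/negP => h; have := maxZ (f |: Z); rewrite subUset sub1set fY ZY h.
  by rewrite cardsU1 fZ /= ltnn => /(_ isT).
set X := ~: (f |: Z).
have eZ : ~: Z = f |: X.
  apply/setP => z; rewrite !inE; case: eqP => // ->; by rewrite fZ.
have sX : X \subset ~: [set f] by rewrite setCS sub1set setU11.
have tc := tree_cut tr f.
move: cZ; rewrite eZ => /L1 [h|/andP[h1 h2]]; first by rewrite h in nf.
have wu : forall z1 z2, cx X z1 z2 -> cx (~: [set f]) z2 z1.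
  by move=> z1 z2 h; rewrite csym; apply: cmono h.
case/orP: h1 => h1; case/orP: h2 => h2.
- by move: nf; rewrite (connect_trans h1 h2).
- rewrite (wu _ _ h1); case ub: (cx _ (en f).1 b) => //; move: tc.
  by rewrite (connect_trans ub (wu _ _ h2)).
- have wf : cx (~: [set f]) (en f).1 b by apply: cmono h2.
  rewrite wf; case ua: (cx _ (en f).1 a) => //; move: tc.
  by rewrite (connect_trans ua (cmono sX h1)).
- by move: nf; rewrite (connect_trans h1 h2).
Qed.

End G.

Local Open Scope ring_scope.

Theorem lemma4p5 (R : realType) (V E : finType) (ends : E -> V * V) (safe : pred E)
  (p q k : nat) (s t : 'I_k -> V) (H : {set E}) (beta : R) (x : E -> R)
  (N TE : finType) (tends : TE -> N * N) (M1 : N -> V) (M2 : TE -> seq E)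
  (F : {set E}) :
  (1 <= p + q)%N ->
  flex_connected ends safe p q s t H ->
  1 <= beta ->
  (forall e, 0 < x e) ->
  (forall e, e \in H -> x e = (4 * (p + q)%:R * beta)^-1) ->
  violating ends safe p q s t H F ->
  tree_embedding ends tends M1 M2 ->
  good_for ends x tends M1 M2 F ->
  (#|ZF ends tends M1 M2 H s t F|)%:R
    <= powR 2 (2 * (p + q)%:R * beta) * k%:R.
Proof.
move=> pq1 _ b1 xpos xH _ [tr inj _ _] good.
set XG := H :\: F.
have Qe : forall v, QF ends H F v = compX ends XG v by [].
set SC := [set QF ends H F v | v in [set v | shattered tends M1 M2 F (QF ends H F v)]].
have vQ : forall v, v \in QF ends H F v by move=> v; rewrite inE connect0.
have stepA : (#|ZF ends tends M1 M2 H s t F| <= 2 ^ #|SC| * k)%N.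
  pose g (P : {set {set V}}) (i : 'I_k) :=
    ((\bigcup_(C in P) C) :|: QF ends H F (s i),
     (\bigcup_(C in SC :\: P) C) :|: QF ends H F (t i)).
  have sub : ZF ends tends M1 M2 H s t F \subset
      [set g xi.1 xi.2 | xi in setX (powerset SC) [set: 'I_k]].
    apply/subsetP => X; rewrite inE => /existsP[A /existsP[B /existsP[i /andP[ps /eqP ->]]]].
    case/and3P: ps => dAB /forallP ps1 /forallP ps2.
    pose P := [set C in SC | C \subset A].
    have shA : forall v, v \in A -> QF ends H F v \subset A.
      move=> v vA; have := ps2 v; rewrite inE vA /= => sh.
      have := ps1 v; rewrite sh /= => /orP[//|/subsetP/(_ v (vQ v)) vB].
      by move: (disjointFr dAB vA); rewrite vB.
    have shB : forall v, v \in B -> QF ends H F v \subset B.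
      move=> v vB; have := ps2 v; rewrite inE vB orbT /= => sh.
      have := ps1 v; rewrite sh /= => /orP[/subsetP/(_ v (vQ v)) vA|//].
      by move: (disjointFr dAB vA); rewrite vB.
    have inSC : forall v, v \in A :|: B -> QF ends H F v \in SC.
      move=> v vAB; apply: imset_f; rewrite inE; have := ps2 v; rewrite vAB; exact.
    have eA : A = \bigcup_(C in P) C.
      apply/setP => v; apply/idP/bigcupP => [vA|[C]].
        exists (QF ends H F v) => //; rewrite inE inSC ?inE ?vA //; exact: shA.
      by rewrite inE => /andP[_ /subsetP CA] /CA.
    have eB : B = \bigcup_(C in SC :\: P) C.
      apply/setP => v; apply/idP/bigcupP => [vB|[C]].
        exists (QF ends H F v) => //; rewrite !inE inSC ?inE ?vB ?orbT // andbT.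
        apply/negP => /subsetP /(_ v (vQ v)) vA.
        by move: (disjointFr dAB vA); rewrite vB.
      rewrite !inE => /andP[nP CSC]; move: CSC (CSC) nP => /imsetP[w]; rewrite inE => sh ->{C} ->; rewrite /= => CA vC.
      have := ps1 w; rewrite sh /= => /orP[h|/subsetP]; last exact.
      by rewrite h in CA.
    apply/imsetP; exists (P, i); last by rewrite /g /= -eA -eB.
    rewrite !inE andbT; apply/subsetP => C; rewrite inE => /andP[] //.
  apply: leq_trans (subset_leq_card sub) _.
  apply: leq_trans (leq_imset_card _ _) _.
  by rewrite cardsX card_powerset cardsT card_ord.
pose Pairs := [set fe : TE * E | (fe.1 \in Minv M2 F) && (fe.2 \in cut ends H (side tends M1 fe.1))].
have stepB : (#|SC| <= #|Pairs|)%N.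
  pose h (fe : TE * E) := QF ends H F (ends fe.2).1.
  suff sub : SC \subset h @: Pairs by apply: leq_trans (subset_leq_card sub) (leq_imset_card _ _).
  apply/subsetP => Q /imsetP[v]; rewrite inE => sh ->{Q}.
  move: (sh); rewrite /shattered => /forallPn[a /forallPn[b]].
  rewrite negb_imply => /andP[/and4P[la lb aQ bQ] nab].
  have [f fM hf] := sep_edge tr nab.
  have sideE : forall a', is_leaf tends a' -> (M1 a' \in side tends M1 f) = connect (adjX tends (~: [set f])) (tends f).1 a'.
    move=> a' la'; rewrite inE; apply/existsP/idP => [[a'' /and3P[la'' /eqP e c]]|c].
      by rewrite -(inj a'' a' la'' la' e).
    by exists a'; rewrite la' eqxx /=; exact c.
  have key : forall c d, c \in QF ends H F v -> d \in QF ends H F v -> c \in side tends M1 f -> d \notin side tends M1 f -> QF ends H F v \in h @: Pairs.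
    move=> c d cQ dQ cS dS.
    have cd : connect (adjX ends XG) c d.
      move: cQ dQ; rewrite !inE => cQ dQ; apply: connect_trans _ dQ; by rewrite csym.
    have [e [eX cr ce]] := L3 cd cS dS.
    apply/imsetP; exists (f, e).
      by rewrite inE fM /= inE cr andbT; move: eX; rewrite inE => /andP[_ ->].
    rewrite /h /= !Qe; apply: compX_eq; move: cQ; rewrite inE => cQ; exact: connect_trans cQ ce.
  case Sa: (M1 a \in side tends M1 f).
    apply: (key (M1 a) (M1 b)) => //.
    by move: hf; rewrite -(sideE a la) -(sideE b lb) Sa; case: (M1 b \in _).
  apply: (key (M1 b) (M1 a)) => //; last by rewrite Sa.
  by move: hf; rewrite -(sideE a la) -(sideE b lb) Sa; case: (M1 b \in _).
set c := (4 * (p + q)%:R * beta)^-1.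
have pqpos : 0 < (p+q)%:R :> R by rewrite ltr0n.
have bpos : 0 < beta by apply: lt_le_trans b1; exact: ltr01.
have Dpos : 0 < 4 * (p + q)%:R * beta by rewrite !mulr_gt0.
have cpos : 0 < c by rewrite invr_gt0.
have stepC : #|Pairs|%:R * c <= 2^-1.
  apply: le_trans good.
  rewrite mulr_natl -sumr_const.
  have -> : \sum_(fe in Pairs) c = \sum_(f in Minv M2 F) \sum_(e in cut ends H (side tends M1 f)) c.
    rewrite pair_big_dep; apply: eq_bigl => -[f e]; by rewrite inE.
  apply: ler_sum => f _.
  rewrite /ycap [X in _ <= X](big_setID (cut ends H (side tends M1 f))) /=.
  have -> : cut ends setT (side tends M1 f) :&: cut ends H (side tends M1 f) = cut ends H (side tends M1 f).
    by apply/setIidPr/subsetP => e; rewrite !inE => /andP[_ ->].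
  rewrite [X in X <= _](eq_bigr (fun e => x e)); last first.
    by move=> e; rewrite inE => /andP[/xH ->].
  rewrite lerDl; apply: sumr_ge0 => e _; exact: ltW.
have mle : #|SC|%:R <= 2 * (p + q)%:R * beta.
  have h1 : #|SC|%:R * c <= 2^-1.
    apply: le_trans stepC; apply: ler_wpM2r; first exact: ltW.
    by rewrite ler_nat.
  move: h1; rewrite /c -!mulrA; set y := (p + q)%:R * beta.
  have ypos : 0 < y by rewrite mulr_gt0.
  rewrite ler_pdivrMr ?mulr_gt0 // => h1; lra.
apply: (le_trans (y := (2 ^ #|SC| * k)%:R)); first by rewrite ler_nat.
rewrite natrM natrX; apply: ler_wpM2r; first exact: ler0n.
rewrite -powR_mulrn //; apply: ler_powR => //; exact: ler1n.
Qed.
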